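(* Let $n>5$ with $n\equiv 0\pmod 4$. Over all even $r\in[2,n-2]$, $E(D_n^s[\boldsymbol r,\boldsymbol{n-r}])$ attains its maximum at $r=4$. More precisely: if $\frac n2\equiv 0\pmod 4$, then $E(D_n^s[\boldsymbol r,\boldsymbol{n-r}])$ is strictly decreasing as $r$ runs through $4,8,\dots,\frac n2,\ \frac n2-2,\frac n2-6,\dots,2$ (in this order); if $\frac n2\equiv 2\pmod 4$, then it is strictly decreasing as $r$ runs through $4,8,\dots,\frac n2-2,\ \frac n2,\frac n2-4,\dots,2$.
   Context: A signed digraph (sidigraph) is a digraph in which every arc carries a sign $+1$ or $-1$; its adjacency matrix $A(S)=[a_{ij}]$ has $a_{ij}$ equal to the sign of the arc $w_iw_j$ if it exists and $0$ otherwise. If $\rho_1,\dots,\rho_n$ are the eigenvalues of $A(S)$, the energy of $S$ is $E(S)=\sum_{k=1}^n|\mathrm{Re}(\rho_k)|$. The sign of a directed cycle is the product of the signs of its arcs. For $k\ge 2$, $C_k$ denotes a directed cycle of length $k$ with sign $+1$ and $\boldsymbol{C}_k$ a directed cycle of length $k$ with sign $-1$. It is known that $E(C_k)=2\cot\frac{\pi}{k}$ if $k\equiv0\pmod 4$, $2\csc\frac{\pi}{k}$ if $k\equiv 2\pmod 4$, $\csc\frac{\pi}{2k}$ if $k$ is odd; and $E(\boldsymbol C_k)=2\csc\frac{\pi}{k}$ if $k\equiv0\pmod 4$, $2\cot\frac{\pi}{k}$ if $k\equiv 2\pmod 4$, $\csc\frac{\pi}{2k}$ if $k$ is odd. For integers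 $p,q\ge 2$ with $p+q\le n$, $D_n^s[p,q]$, $D_n^s[\boldsymbol p,\boldsymbol q]$, $D_n^s[\boldsymbol p,q]$, $D_n^s[p,\boldsymbol q]$ denote an $n$-vertex sidigraph whose only directed cycles are two vertex-disjoint cycles of lengths $p$ and $q$ (all other vertices lying on no directed cycle), where a bold entry indicates that the cycle of that length is negative and a non-bold entry that it is positive. Its energy is the sum of the energies of its two cycles, e.g. $E(D_n^s[\boldsymbol p,\boldsymbol q])=E(\boldsymbol C_p)+E(\boldsymbol C_q)$; in particular the order of the two entries does not matter. *)

(* Defs.v *)
From Stdlib Require Import Reals Lia Arith List Sorted.
Import ListNotations.
Open Scope R_scope.

Definition csc (x : R) : R := / sin x.
Definition cot (x : R) : R := cos x / sin x.

Definition E_poscycle (k : nat) : R :=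
  if (k mod 4 =? 0)%nat then 2 * cot (PI / INR k)
  else if (k mod 4 =? 2)%nat then 2 * csc (PI / INR k)
  else csc (PI / (2 * INR k)).

(* Energy of the negative directed cycle (bold C_k) (k >= 2), as recalled in the paper. *)
Definition E_negcycle (k : nat) : R :=
  if (k mod 4 =? 0)%nat then 2 * csc (PI / INR k)
  else if (k mod 4 =? 2)%nat then 2 * cot (PI / INR k)
  else csc (PI / (2 * INR k)).

(* E(D_n^s[bold p, bold q]) = E(bold C_p) + E(bold C_q)  (n is the number of
   vertices; it does not affect the energy). *)
Definition E_D_negneg (n p q : nat) : R := E_negcycle p + E_negcycle q.

(* The order of r-values in the statement, for m = n/2:
   case m = 0 mod 4:  4, 8, ..., m, m-2, m-6, ..., 2
   case m = 2 mod 4:  4, 8, ..., m-2, m, m-4, ..., 2 *)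
Definition order_case0 (m : nat) : list nat :=
  map (fun k => 4 * (k + 1))%nat (seq 0 (m / 4))
  ++ map (fun j => m - 2 - 4 * j)%nat (seq 0 (m / 4)).

Definition order_case2 (m : nat) : list nat :=
  map (fun k => 4 * (k + 1))%nat (seq 0 ((m - 2) / 4))
  ++ map (fun j => m - 4 * j)%nat (seq 0 ((m - 2) / 4 + 1)).

Definition strictly_decreasing_along (f : nat -> R) (l : list nat) : Prop :=
  StronglySorted (fun a b => f b < f a) l.

(* Main.v *)
Require Import Defs.
From Stdlib Require Import Reals Arith List Lra Lia Sorted.
From Coquelicot Require Import Coquelicot.
Open Scope R_scope.

Lemma tcos_lt_sin t : 0 < t <= PI / 2 -> t * cos t < sin t.
Proof.
  intros [H1 H2].
  assert (HP := PI_4).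
  destruct (sin_bound t 0) as [Hs _]; try lra.
  destruct (cos_bound t 0) as [_ Hc]; try lra.
  unfold sin_approx, cos_approx in *. simpl in *.
  unfold sin_term, cos_term in *. simpl in *.
  assert (t <= 2) by lra.
  assert (cos t <= (1 + - (t*t) / 2 + t*t*(t*t) / 24)).
  { eapply Rle_trans; [exact Hc|]. right. field. }
  assert (t + - (t*t*t)/6 <= sin t).
  { eapply Rle_trans; [|exact Hs]. right. field. }
  assert (t * cos t <= t * (1 + - (t*t) / 2 + t*t*(t*t) / 24)) by (apply Rmult_le_compat_l; lra).
  assert (t*t <= 4) by nra.
  assert (0 < t*t*t) by (apply Rmult_lt_0_compat; nra).
  assert (t * (1 + - (t*t) / 2 + t*t*(t*t) / 24) < t + - (t*t*t)/6).
  { replace (t + - (t*t*t)/6 - t * (1 + - (t*t) / 2 + t*t*(t*t) / 24)) with ((t*t*t)*(8 - t*t)/24) by field.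
    apply Rminus_gt_0_lt. replace (t + - (t*t*t)/6 - t * (1 + - (t*t) / 2 + t*t*(t*t) / 24)) with ((t*t*t)*(8 - t*t)/24) by field.
    apply Rdiv_lt_0_compat; [apply Rmult_lt_0_compat|]; lra. }
  lra.
Qed.

Definition G (t : R) := t * t * cos t / (sin t * sin t).
Definition G' (c : R) := c * (2 * sin c * cos c - c * (1 + cos c * cos c)) / (sin c * sin c * sin c).

Lemma G_der c : 0 < c <= PI/2 -> derivable_pt_lim G c (G' c).
Proof.
  intros Hc. assert (Hs : 0 < sin c) by (apply sin_gt_0; lra).
  apply is_derive_Reals. unfold G, G'.
  auto_derive. { nra. }
  assert (H1 := sin2_cos2 c). unfold Rsqr in H1.
  replace (1 + cos c * cos c) with (sin c * sin c + 2 * cos c * cos c) by lra. field. lra.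
Qed.

Lemma G'_neg c : 0 < c <= PI/2 -> G' c < 0.
Proof.
  intros Hc. assert (Hs : 0 < sin c) by (apply sin_gt_0; lra).
  assert (Hco : 0 <= cos c) by (apply cos_ge_0; lra).
  assert (Hl := sin_lt_x c ltac:(lra)).
  unfold G'. unfold Rdiv. 
  assert (0 < / (sin c * sin c * sin c)) by (apply Rinv_0_lt_compat; repeat apply Rmult_lt_0_compat; lra).
  assert (2 * sin c * cos c - c * (1 + cos c * cos c) < 0).
  { destruct (Rle_lt_or_eq_dec 0 (cos c) Hco) as [Hp|He].
    - assert (0 < cos c * (c - sin c)) by (apply Rmult_lt_0_compat; lra). assert (0 <= c*((1-cos c)*(1-cos c))) by (apply Rmult_le_pos; [lra | apply (Rle_0_sqr (1 - cos c))]). replace (2 * sin c * cos c - c * (1 + cos c * cos c)) with (-(c*((1-cos c)*(1-cos c)) + 2*(cos c * (c - sin c)))) by ring. lra.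
    - rewrite <- He. ring_simplify. lra. }
  assert (c * (2 * sin c * cos c - c * (1 + cos c * cos c)) < 0) by nra.
  nra.
Qed.

Lemma G_decr t1 t2 : 0 < t1 -> t1 < t2 -> t2 <= PI/2 -> G t2 < G t1.
Proof.
  intros H1 H2 H3.
  destruct (MVT_cor2 G G' t1 t2 H2) as [c [Hc1 Hc2]].
  { intros c Hc. apply G_der. lra. }
  assert (G' c < 0) by (apply G'_neg; lra). nra.
Qed.

Definition Ps (t : R) := t * t / (sin t * sin t).
Definition Ps' (c : R) := 2 * c * (sin c - c * cos c) / (sin c * sin c * sin c).

Lemma Ps_der c : 0 < c <= PI/2 -> derivable_pt_lim Ps c (Ps' c).
Proof.
  intros Hc. assert (Hs : 0 < sin c) by (apply sin_gt_0; lra).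
  apply is_derive_Reals. unfold Ps, Ps'.
  auto_derive. { nra. }
  field. lra.
Qed.

Lemma Ps_incr t1 t2 : 0 < t1 -> t1 < t2 -> t2 <= PI/2 -> Ps t1 < Ps t2.
Proof.
  intros H1 H2 H3.
  destruct (MVT_cor2 Ps Ps' t1 t2 H2) as [c [Hc1 Hc2]].
  { intros c Hc. apply Ps_der. lra. }
  assert (0 < Ps' c).
  { assert (Hs : 0 < sin c) by (apply sin_gt_0; lra).
    assert (Ht := tcos_lt_sin c ltac:(lra)).
    unfold Ps'. apply Rdiv_lt_0_compat.
    - apply Rmult_lt_0_compat; lra.
    - repeat apply Rmult_lt_0_compat; lra. }
  nra.
Qed.

Definition H (x : R) := 2 * csc (PI / x).
Definition H' (x : R) := 2 / PI * G (PI / x).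
Definition K (x : R) := 2 * cot (PI / x).
Definition K' (x : R) := 2 / PI * Ps (PI / x).

Lemma t_range x : 2 <= x -> 0 < PI / x <= PI / 2.
Proof.
  intros Hx. assert (HP := PI_RGT_0). split.
  - apply Rdiv_lt_0_compat; lra.
  - unfold Rdiv. apply Rmult_le_compat_l; [lra|]. apply Rinv_le_contravar; lra.
Qed.

Lemma H_der x : 2 <= x -> derivable_pt_lim H x (H' x).
Proof.
  intros Hx. destruct (t_range x Hx) as [T1 T2].
  assert (Hs : 0 < sin (PI / x)) by (apply sin_gt_0; lra).
  assert (HP := PI_RGT_0).
  apply is_derive_Reals. unfold H, H', G, csc.
  auto_derive. { split; [lra|split; [lra|exact I]]. }
  change (PI * / x) with (PI / x). field. split; lra.
Qed.

Lemma K_der x : 2 <= x -> derivable_pt_lim K x (K' x).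
Proof.
  intros Hx. destruct (t_range x Hx) as [T1 T2].
  assert (Hs : 0 < sin (PI / x)) by (apply sin_gt_0; lra).
  assert (HP := PI_RGT_0).
  apply is_derive_Reals. unfold K, K', Ps, cot.
  auto_derive. { repeat split; try lra. }
  assert (H1 := sin2_cos2 (PI/x)). unfold Rsqr in H1.
  change (PI * / x) with (PI / x).
  field_simplify; try (split; lra).
  replace (2 * PI * sin (PI / x) ^ 2 + 2 * PI * cos (PI / x) ^ 2) with (2 * PI) by (simpl; nra).
  reflexivity.
Qed.

Lemma H'_incr x1 x2 : 2 <= x1 -> x1 < x2 -> H' x1 < H' x2.
Proof.
  intros H1 H2. unfold H'. assert (HP := PI_RGT_0).
  destruct (t_range x1 H1). 
  assert (PI / x2 < PI / x1).
  { unfold Rdiv. apply Rmult_lt_compat_l; [lra|]. apply Rinv_lt_contravar; nra. }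
  assert (0 < PI / x2) by (apply Rdiv_lt_0_compat; lra).
  assert (G (PI/x1) < G (PI / x2)) by (apply G_decr; lra).
  assert (0 < 2 / PI) by (apply Rdiv_lt_0_compat; lra).
  nra.
Qed.

Lemma K'_decr x1 x2 : 2 <= x1 -> x1 < x2 -> K' x2 < K' x1.
Proof.
  intros H1 H2. unfold K'. assert (HP := PI_RGT_0).
  destruct (t_range x1 H1). 
  assert (PI / x2 < PI / x1).
  { unfold Rdiv. apply Rmult_lt_compat_l; [lra|]. apply Rinv_lt_contravar; nra. }
  assert (0 < PI / x2) by (apply Rdiv_lt_0_compat; lra).
  assert (Ps (PI/x2) < Ps (PI / x1)) by (apply Ps_incr; lra).
  assert (0 < 2 / PI) by (apply Rdiv_lt_0_compat; lra).
  nra.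
Qed.

Lemma RH a b : 2 <= a -> a + 4 <= b - 4 -> H (a+4) + H (b-4) < H a + H b.
Proof.
  intros Ha Hb.
  destruct (MVT_cor2 H H' a (a+4) ltac:(lra)) as [c1 [E1 C1]].
  { intros c Hc. apply H_der. lra. }
  destruct (MVT_cor2 H H' (b-4) b ltac:(lra)) as [c2 [E2 C2]].
  { intros c Hc. apply H_der. lra. }
  assert (H' c1 < H' c2) by (apply H'_incr; lra).
  replace (a + 4 - a) with 4 in E1 by ring.
  replace (b - (b - 4)) with 4 in E2 by ring.
  lra.
Qed.

Lemma RK a b : 2 <= a -> a + 4 <= b - 4 -> K a + K b < K (a+4) + K (b-4).
Proof.
  intros Ha Hb.
  destruct (MVT_cor2 K K' a (a+4) ltac:(lra)) as [c1 [E1 C1]].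
  { intros c Hc. apply K_der. lra. }
  destruct (MVT_cor2 K K' (b-4) b ltac:(lra)) as [c2 [E2 C2]].
  { intros c Hc. apply K_der. lra. }
  assert (K' c2 < K' c1) by (apply K'_decr; lra).
  replace (a + 4 - a) with 4 in E1 by ring.
  replace (b - (b - 4)) with 4 in E2 by ring.
  lra.
Qed.

Lemma H_gt x : 2 <= x -> 2 * x / PI < H x.
Proof.
  intros Hx. destruct (t_range x Hx) as [T1 T2]. assert (HP := PI_RGT_0).
  assert (Hs : 0 < sin (PI / x)) by (apply sin_gt_0; lra).
  assert (Hl := sin_lt_x _ T1).
  unfold H, csc.
  replace (2 * x / PI) with (2 * / (PI / x)) by (field; split; lra).
  apply Rmult_lt_compat_l; [lra|]. apply Rinv_lt_contravar; nra.
Qed.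

Lemma K_lt x : 2 <= x -> K x < 2 * x / PI.
Proof.
  intros Hx. destruct (t_range x Hx) as [T1 T2]. assert (HP := PI_RGT_0).
  assert (Hs : 0 < sin (PI / x)) by (apply sin_gt_0; lra).
  assert (Hl := tcos_lt_sin _ (conj T1 T2)).
  unfold K, cot.
  replace (2 * x / PI) with (2 * / (PI / x)) by (field; split; lra).
  apply Rmult_lt_compat_l; [lra|].
  apply (Rmult_lt_reg_r (sin (PI / x) * (PI / x))); [nra|].
  field_simplify; try lra. 
Qed.

Lemma En0 k : (k mod 4 = 0)%nat -> E_negcycle k = H (INR k).
Proof. intros Hk. unfold E_negcycle, H. rewrite Hk. reflexivity. Qed.
Lemma En2 k : (k mod 4 = 2)%nat -> E_negcycle k = K (INR k).
Proof. intros Hk. unfold E_negcycle, K. rewrite Hk. reflexivity. Qed.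


Lemma dm k : (k = 4*(k/4) + k mod 4 /\ k mod 4 < 4)%nat.
Proof. split; [apply Nat.div_mod; lia | apply Nat.mod_upper_bound; lia]. Qed.
Lemma dm2 k : (k = 2*(k/2) + k mod 2 /\ k mod 2 < 2)%nat.
Proof. split; [apply Nat.div_mod; lia | apply Nat.mod_upper_bound; lia]. Qed.

Definition F n r := E_D_negneg n r (n - r).

Lemma F0 n r : (n mod 4 = 0)%nat -> (r mod 4 = 0)%nat -> (4 <= r <= n - 4)%nat ->
  F n r = H (INR r) + H (INR n - INR r).
Proof.
  intros Hn Hr Hb. unfold F, E_D_negneg. rewrite (En0 r Hr), En0.
  - rewrite minus_INR by lia. reflexivity.
  - pose proof (dm n); pose proof (dm r); pose proof (dm (n-r)). lia.
Qed.

Lemma F2 n r : (n mod 4 = 0)%nat -> (r mod 4 = 2)%nat -> (2 <= r <= n - 2)%nat ->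
  F n r = K (INR r) + K (INR n - INR r).
Proof.
  intros Hn Hr Hb. unfold F, E_D_negneg. rewrite (En2 r Hr), En2.
  - rewrite minus_INR by lia. reflexivity.
  - pose proof (dm n); pose proof (dm r); pose proof (dm (n-r)). lia.
Qed.

Lemma INR_le a b : (a <= b)%nat -> INR a <= INR b.
Proof. apply le_INR. Qed.

Lemma F0_big n r : (n mod 4 = 0)%nat -> (r mod 4 = 0)%nat -> (4 <= r <= n - 4)%nat ->
  2 * INR n / PI < F n r.
Proof.
  intros Hn Hr Hb. rewrite F0 by auto.
  assert (HP := PI_RGT_0).
  assert (A1 := INR_le 4 r ltac:(lia)).
  assert (A2 := INR_le (r + 4) n ltac:(lia)).
  rewrite plus_INR in A2. simpl in A1, A2.
  assert (B1 := H_gt (INR r) ltac:(lra)).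
  assert (B2 := H_gt (INR n - INR r) ltac:(lra)).
  replace (2 * INR n / PI) with (2 * INR r / PI + 2 * (INR n - INR r) / PI) by (field; lra).
  lra.
Qed.

Lemma F2_small n r : (n mod 4 = 0)%nat -> (r mod 4 = 2)%nat -> (2 <= r <= n - 2)%nat ->
  F n r < 2 * INR n / PI.
Proof.
  intros Hn Hr Hb. rewrite F2 by auto.
  assert (HP := PI_RGT_0).
  assert (A1 := INR_le 2 r ltac:(lia)).
  assert (A2 := INR_le (r + 2) n ltac:(lia)).
  rewrite plus_INR in A2. simpl in A1, A2.
  assert (B1 := K_lt (INR r) ltac:(lra)).
  assert (B2 := K_lt (INR n - INR r) ltac:(lra)).
  replace (2 * INR n / PI) with (2 * INR r / PI + 2 * (INR n - INR r) / PI) by (field; lra).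
  lra.
Qed.

Lemma S0 n r : (n mod 4 = 0)%nat -> (r mod 4 = 0)%nat -> (4 <= r)%nat -> (2*r+8 <= n)%nat ->
  F n (r + 4) < F n r.
Proof.
  intros Hn Hr H1 H2.
  rewrite (F0 n r), (F0 n (r+4)); try lia.
  2: { pose proof (dm r); pose proof (dm (r+4)). lia. }
  rewrite plus_INR. simpl (INR 4).
  assert (A1 := INR_le 4 r ltac:(lia)).
  assert (A2 := INR_le (2*r + 8) n ltac:(lia)).
  rewrite plus_INR, mult_INR in A2. simpl in A1, A2.
  replace (INR n - (INR r + (1 + 1 + 1 + 1))) with (INR n - INR r - 4) by ring.
  replace (INR r + (1 + 1 + 1 + 1)) with (INR r + 4) by ring.
  apply RH; lra.
Qed.

Lemma S2 n r : (n mod 4 = 0)%nat -> (r mod 4 = 2)%nat -> (2 <= r)%nat -> (2*r+8 <= n)%nat ->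
  F n r < F n (r + 4).
Proof.
  intros Hn Hr H1 H2.
  rewrite (F2 n r), (F2 n (r+4)); try lia.
  2: { pose proof (dm r); pose proof (dm (r+4)). lia. }
  rewrite plus_INR. simpl (INR 4).
  assert (A1 := INR_le 2 r ltac:(lia)).
  assert (A2 := INR_le (2*r + 8) n ltac:(lia)).
  rewrite plus_INR, mult_INR in A2. simpl in A1, A2.
  replace (INR n - (INR r + (1 + 1 + 1 + 1))) with (INR n - INR r - 4) by ring.
  replace (INR r + (1 + 1 + 1 + 1)) with (INR r + 4) by ring.
  apply RK; lra.
Qed.

Lemma F_sym n r : (r <= n)%nat -> F n (n - r) = F n r.
Proof.
  intros Hr. unfold F, E_D_negneg. replace (n - (n - r))%nat with r by lia. ring.
Qed.

Lemma SS_app {A} (Rl : A -> A -> Prop) l1 l2 :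
  StronglySorted Rl l1 -> StronglySorted Rl l2 ->
  (forall x y, In x l1 -> In y l2 -> Rl x y) -> StronglySorted Rl (l1 ++ l2).
Proof.
  induction l1 as [|a l1 IH]; intros S1 S2 C; simpl; auto.
  inversion S1; subst. constructor.
  - apply IH; auto. intros x y Hx Hy. apply C; simpl; auto.
  - apply Forall_app. split; auto. apply Forall_forall. intros y Hy. apply C; simpl; auto.
Qed.

Lemma SS_map_seq (Rl : nat -> nat -> Prop) g q : forall s,
  (forall i j, (s <= i)%nat -> (i < j)%nat -> (j < s + q)%nat -> Rl (g i) (g j)) ->
  StronglySorted Rl (map g (seq s q)).
Proof.
  induction q as [|q IH]; intros s Hs; simpl. constructor.
  constructor.
  - apply IH. intros i j H1 H2 H3. apply Hs; lia.
  - apply Forall_forall. intros y Hy. apply in_map_iff in Hy. destruct Hy as [j [<- Hj]].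
    apply in_seq in Hj. apply Hs; lia.
Qed.

Lemma chain (P : nat -> R) q : (forall i, (i + 1 < q)%nat -> P (i+1)%nat < P i) ->
  forall i j, (i < j)%nat -> (j < q)%nat -> P j < P i.
Proof.
  intros Hs i j Hij. induction Hij as [|j Hij IH]; intros Hj.
  - replace (S i) with (i+1)%nat by lia. apply Hs. lia.
  - eapply Rlt_trans; [|apply IH; lia]. replace (S j) with (j+1)%nat by lia. apply Hs. lia.
Qed.

Lemma sorted_gen n g1 g2 q1 q2 : (n mod 4 = 0)%nat ->
  (forall i, (i + 1 < q1)%nat -> F n (g1 (i+1)%nat) < F n (g1 i)) ->
  (forall i, (i + 1 < q2)%nat -> F n (g2 (i+1)%nat) < F n (g2 i)) ->
  (forall i, (i < q1)%nat -> (g1 i mod 4 = 0 /\ 4 <= g1 i <= n - 4)%nat) ->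
  (forall i, (i < q2)%nat -> (g2 i mod 4 = 2 /\ 2 <= g2 i <= n - 2)%nat) ->
  strictly_decreasing_along (fun r => E_D_negneg n r (n - r)) (map g1 (seq 0 q1) ++ map g2 (seq 0 q2)).
Proof.
  intros Hn A1 A2 B1 B2. unfold strictly_decreasing_along.
  apply SS_app.
  - apply SS_map_seq. intros i j _ Hij Hj. apply (chain (fun i => F n (g1 i)) q1 A1); lia.
  - apply SS_map_seq. intros i j _ Hij Hj. apply (chain (fun i => F n (g2 i)) q2 A2); lia.
  - intros x y Hx Hy. apply in_map_iff in Hx. destruct Hx as [i [<- Hi]]. apply in_seq in Hi.
    apply in_map_iff in Hy. destruct Hy as [j [<- Hj]]. apply in_seq in Hj.
    destruct (B1 i ltac:(lia)). destruct (B2 j ltac:(lia)).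
    apply Rlt_trans with (2 * INR n / PI).
    + apply (F2_small n); auto.
    + apply (F0_big n); auto.
Qed.

Lemma part1 n : (5 < n)%nat -> (n mod 4 = 0)%nat -> forall r : nat, Nat.Even r -> (2 <= r <= n - 2)%nat ->
     E_D_negneg n r (n - r) <= E_D_negneg n 4 (n - 4).
Proof.
  intros H5 Hn r [k Hk] Hr. change (F n r <= F n 4).
  pose proof (dm n) as Dn. pose proof (dm r) as Dr.
  assert (r mod 4 = 0 \/ r mod 4 = 2)%nat as [C|C] by lia.
  - assert (Hc : forall j, (1 <= j)%nat -> (8 * j <= n)%nat -> F n (4 * j) <= F n 4).
    { induction j as [|j IH]; intros J1 J2; [lia|].
      destruct (Nat.eq_dec j 0) as [->|Hj0]; [simpl; lra|].
      replace (4 * S j)%nat with (4 * j + 4)%nat by lia.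
      eapply Rle_trans; [|apply IH; lia]. left. apply S0; try lia.
      pose proof (dm (4*j)). lia. }
    destruct (Nat.le_gt_cases (2 * r) n).
    + replace r with (4 * (r / 4))%nat by lia. apply Hc; lia.
    + rewrite <- F_sym by lia. pose proof (dm (n - r)).
      replace (n - r)%nat with (4 * ((n - r) / 4))%nat by lia. apply Hc; lia.
  - left. apply Rlt_trans with (2 * INR n / PI).
    + apply (F2_small n); auto.
    + apply (F0_big n); auto; try lia.
Qed.

Theorem lemma3p7 (n : nat) (Hn : (5 < n)%nat) (Hn4 : (n mod 4 = 0)%nat) :
  (forall r : nat, Nat.Even r -> (2 <= r <= n - 2)%nat ->
     E_D_negneg n r (n - r) <= E_D_negneg n 4 (n - 4))
  /\ ((n / 2) mod 4 = 0 -> 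
      strictly_decreasing_along (fun r => E_D_negneg n r (n - r)) (order_case0 (n / 2)))%nat
  /\ ((n / 2) mod 4 = 2 ->
      strictly_decreasing_along (fun r => E_D_negneg n r (n - r)) (order_case2 (n / 2)))%nat.
Proof.
  pose proof (dm n) as Dn. pose proof (dm2 n) as D2. pose proof (dm (n/2)) as Dm.
  split; [apply part1; auto|split].
  - intros Hm. unfold order_case0. apply sorted_gen; auto; intros i Hi; cbv beta.
    + replace (4 * (i + 1 + 1))%nat with (4 * (i + 1) + 4)%nat by lia.
      apply S0; try lia. pose proof (dm (4 * (i+1))). lia.
    + replace (n / 2 - 2 - 4 * i)%nat with (n / 2 - 2 - 4 * (i + 1) + 4)%nat by lia.
      apply S2; try lia. pose proof (dm (n / 2 - 2 - 4 * (i + 1))). lia.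
    + pose proof (dm (4 * (i+1))). lia.
    + pose proof (dm (n / 2 - 2 - 4 * i)). lia.
  - intros Hm. unfold order_case2. pose proof (dm (n/2 - 2)). apply sorted_gen; auto; intros i Hi; cbv beta.
    + replace (4 * (i + 1 + 1))%nat with (4 * (i + 1) + 4)%nat by lia.
      apply S0; try lia. pose proof (dm (4 * (i+1))). lia.
    + replace (n / 2 - 4 * i)%nat with (n / 2 - 4 * (i + 1) + 4)%nat by lia.
      apply S2; try lia. pose proof (dm (n / 2 - 4 * (i + 1))). lia.
    + pose proof (dm (4 * (i+1))). lia.
    + pose proof (dm (n / 2 - 4 * i)). lia.
Qed.
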